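(* Let $n,k$ be positive integers such that $s^{n,k}=\frac{n(n+1)}{2k}$ is an integer, and let $\mathcal P=[p_1,\dots,p_k]$ be an ascending partition of $n$ of size $k$ of the form $\mathcal P=[2^e,p^f,\ldots]$ with $e,f>0$ and $p\ge 3$; that is, $p_1=\cdots=p_e=2$, $p_{e+1}=\cdots=p_{e+f}=p$, and $p_i>p$ for all $i>e+f$. Let $c=s^{n,k}-n$, $C=\{x\in[n]: x\ge c\}$ and $h=|C|-2e=2n-s^{n,k}+1-2e$. Suppose that $f>h$ and \[ \sum_{i=c-p(f-h)}^{c-1} i < (f-h)\,s^{n,k}. \] Then $\mathcal P$ is non-equitable.
   Context: $[n]=\{1,2,\ldots,n\}$. An ascending partition of $n$ of size $k$ is a sequence of positive integers $[p_1,\ldots,p_k]$ with $p_1\le\cdots\le p_k$ and $\sum_i p_i=n$. Such a partition is equitable if $[n]$ can be partitioned into sets $A_1,\dots,A_k$ with $|A_i|=p_i$ such that all the sums $\sum_{x\in A_i}x$ are equal (necessarily to $s^{n,k}$). The notation $[q_1^{e_1},q_2^{e_2},\ldots]$ with $q_1<q_2<\cdots$ means the ascending partition having exactly $e_i$ parts equal to $q_i$. *)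

(* Defs.v *)
From mathcomp Require Import all_boot all_order all_algebra.
Set Implicit Arguments. Unset Strict Implicit. Unset Printing Implicit Defensive.
Import GRing.Theory Num.Theory.

(* [n] = {1,...,n} is represented by 'I_n, the element x : 'I_n standing for x+1. *)

Definition ascending_partition (n k : nat) (P : seq nat) : Prop :=
  [/\ size P = k, all (fun q => 0 < q) P, sorted leq P & sumn P = n].

Definition snk (n k : nat) : nat := ((n * n.+1) %/ 2) %/ k.

Definition equitable (n : nat) (P : seq nat) : Prop :=
  exists A : 'I_(size P) -> {set 'I_n},
    [/\ forall i j, i != j -> [disjoint A i & A j],
        \bigcup_(i < size P) A i = setT,
        forall i : 'I_(size P), #|A i| = nth 0 P i &
        forall i j : 'I_(size P),
          \sum_(x in A i) (x : nat).+1 = \sum_(x in A j) (x : nat).+1].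

(* Main.v *)
Require Import Defs.
From mathcomp Require Import all_boot all_order all_algebra zify.
Import Order.TTheory GRing.Theory Num.Theory.
Local Open Scope ring_scope.

Lemma sum_bigcup_sub K n (A : 'I_K -> {set 'I_n}) (B : {set 'I_K}) (E : 'I_n -> nat) :
  (forall i j, i != j -> [disjoint A i & A j]) ->
  (\sum_(x in \bigcup_(i in B) A i) E x = \sum_(i in B) \sum_(x in A i) E x)%N.
Proof.
move=> dA; pose F i := if i \in B then A i else set0.
have -> : \bigcup_(i in B) A i = \bigcup_i F i.
  apply/setP => x; apply/bigcupP/bigcupP => [[i iB xA]|[i _]].
    by exists i => //; rewrite /F iB.
  by rewrite /F; case: ifP => iB xA; [exists i | rewrite inE in xA].
rewrite partition_disjoint_bigcup; last first.
  move=> i j ij; rewrite /F; case: ifP => _; case: ifP => _;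
  try exact: dA; by rewrite -setI_eq0 ?set0I ?setI0.
rewrite [RHS]big_mkcond; apply: eq_bigr => i _; rewrite /F; case: ifP => _ //.
by rewrite big_set0.
Qed.

Lemma top_bound n (U : {set 'I_n}) (c : int) :
  (forall x, x \in U -> ((x : nat).+1)%:Z < c) ->
  \sum_(x in U) ((x : nat).+1)%:Z <= \sum_(j < #|U|) (c - #|U|%:Z + j%:Z).
Proof.
move Hn: #|U| => N; elim: N U c Hn => [|N IH] U c HU Hc.
  by move/eqP: HU; rewrite cards_eq0 => /eqP ->; rewrite big_set0 big_ord0.
have [x0 x0U] : exists x, x \in U.
  by apply/set0Pn; rewrite -card_gt0 HU.
case: (arg_maxnP (fun x : 'I_n => (x : nat)) x0U) => M MU0 Mmax.
have MU : M \in U by [].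
rewrite (bigD1 M) //= big_ord_recr /=.
have HV : #|U :\ M| = N by move: (cardsD1 M U); rewrite HU MU add1n => -[].
have := IH (U :\ M) ((M : nat).+1%:Z) HV.
have -> : \sum_(i in U | i != M) ((i:nat).+1)%:Z = \sum_(i in U :\ M) ((i:nat).+1)%:Z.
  by apply: eq_bigl => i; rewrite !inE andbC.
move=> /(_ _) H.
have {}H : \sum_(i in U :\ M) ((i:nat).+1)%:Z <= \sum_(j < N) ((M:nat).+1%:Z - N%:Z + j%:Z).
  apply: H => y; rewrite !inE => /andP [yM yU].
  rewrite ltz_nat ltnS ltn_neqAle; have := Mmax y yU; move=> /= ->; rewrite andbT; exact yM.
have HM := Hc M MU.
have : \sum_(j < N) ((M:nat).+1%:Z - N%:Z + j%:Z) <= \sum_(j < N) (c - N.+1%:Z + j%:Z).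
  apply: ler_sum => j _; lia.
move=> H2; rewrite addrC; apply: lerD; [exact: le_trans H H2 | lia].
Qed.

Lemma tri_sum n : ((\sum_(x < n) (x : nat).+1) * 2 = n * n.+1)%N.
Proof.
elim: n => [|n IH]; first by rewrite big_ord0.
rewrite big_ord_recr /= mulnDl IH; lia.
Qed.

Lemma card_nth_eq (P : seq nat) q :
  #|[set i : 'I_(size P) | nth 0%N P i == q]| = count (pred1 q) P.
Proof.
rewrite -sum1_card -sum1_count (big_nth 0%N) big_mkord.
by apply: eq_bigl => i; rewrite inE.
Qed.

Lemma count_form (e f p q : nat) (rest : seq nat) :
  (q <= p)%N -> all (fun x => p < x)%N rest ->
  count (pred1 q) (nseq e 2%N ++ nseq f p ++ rest) =
  ((2 == q) * e + (p == q) * f)%N.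
Proof.
move=> qp Hr; rewrite !count_cat !count_nseq /=.
have -> : count (pred1 q) rest = 0%N.
  apply/eqP; rewrite eqn0Ngt -has_count; apply/hasPn => x xr /=.
  move/allP: Hr => /(_ x xr) px; apply/eqP => xq; lia.
by rewrite addn0.
Qed.

Theorem mainTheorem1 (n k : nat) (P : seq nat) (e f p : nat) (rest : seq nat) :
  (0 < n)%N -> (0 < k)%N ->
  (k %| (n * n.+1) %/ 2)%N -> (2 %| n * n.+1)%N ->
  ascending_partition n k P ->
  P = nseq e 2%N ++ nseq f p ++ rest ->
  (0 < e)%N -> (0 < f)%N -> (3 <= p)%N ->
  all (fun q => p < q)%N rest ->
  let s : int := (snk n k)%:Z in
  let c : int := s - n%:Z in
  let C : {set 'I_n} := [set x : 'I_n | c <= ((x : nat).+1)%:Z] in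
  let h : int := #|C|%:Z - (2 * e)%:Z in
  h < f%:Z ->
  \sum_(j < (p * `|f%:Z - h|)%N) (c - p%:Z * (f%:Z - h) + j%:Z)
    < (f%:Z - h) * s ->
  ~ equitable n P.
Proof.
move=> n0 k0 _ _ [Hsz _ _ _] HP e0 f0 p3 Hrest s c C h hf Hineq [A [dA cov cardA sumA]].
subst k.
have K0 : (0 < size P)%N by rewrite HP !size_cat !size_nseq; lia.
pose i0 : 'I_(size P) := Ordinal K0.
pose S := (\sum_(x in A i0) (x : nat).+1)%N.
have sumS : forall i, (\sum_(x in A i) (x : nat).+1)%N = S by move=> i; exact: sumA.
have tot : (\sum_(x in \bigcup_(i < size P) A i) (x : nat).+1 = size P * S)%N.
  rewrite partition_disjoint_bigcup // (eq_bigr (fun _ => S)) //.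
  by rewrite sum_nat_const card_ord.
have sE : s = S%:Z.
  rewrite /s /snk; congr Posz.
  move: tot; rewrite cov => tot.
  have := tri_sum n; rewrite -(eq_bigl _ _ (fun x => in_setT x)) tot => <-.
  by rewrite mulnK // mulKn.
have two_in : forall (i : 'I_(size P)) (x : 'I_n), nth 0%N P i = 2%N -> x \in A i -> x \in C.
  move=> i x Pi xA; rewrite inE /c sE.
  have := sumS i; rewrite (bigD1 x) //=.
  have Hc1 : #|A i :\ x| = 1%N.
    by move: (cardsD1 x (A i)); rewrite cardA Pi xA add1n => -[].
  have : (\sum_(y in A i | y != x) (y : nat).+1 <= n)%N.
    apply: (@leq_trans (\sum_(y in A i :\ x) n)).
      rewrite (eq_bigl (fun y => y \in A i :\ x)); last by move=> y; rewrite !inE andbC.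
      by apply: leq_sum => y _; exact: ltn_ord.
    by rewrite sum_nat_const Hc1 mul1n.
  move=> H1 H2; have H3 : (S <= x.+1 + n)%N by rewrite -H2 leq_add2l.
  lia.
pose Two := [set i : 'I_(size P) | nth 0%N P i == 2%N].
pose Pset := [set i : 'I_(size P) | nth 0%N P i == p].
have cTwo : #|Two| = e.
  by rewrite card_nth_eq HP count_form //; [rewrite eqxx; case: eqP => [?|_]; lia | lia].
have cP : #|Pset| = f.
  by rewrite card_nth_eq HP count_form //; rewrite eqxx; case: eqP => [?|_]; lia.
have dsub : forall (F : 'I_(size P) -> {set 'I_n}), (forall i, F i \subset A i) ->
    forall i j, i != j -> [disjoint F i & F j].
  move=> F FA i j ij; apply: (disjointW (FA i) (FA j)); exact: dA.
pose W2 := \bigcup_(i in Two) A i.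
have cW2 : #|W2| = (2 * e)%N.
  rewrite -sum1_card sum_bigcup_sub // (eq_bigr (fun _ => 2%N)).
    by rewrite sum_nat_const cTwo mulnC.
  by move=> i; rewrite inE sum1_card cardA => /eqP.
have W2C : W2 \subset C.
  apply/subsetP => x /bigcupP [i]; rewrite inE => /eqP; exact: two_in.
pose Good := [set i in Pset | A i :&: C == set0].
pose Bad := Pset :\: Good.
pose X := \bigcup_(i in Bad) (A i :&: C).
have cX : (#|Bad| <= #|X|)%N.
  rewrite -sum1_card -[#|X|]sum1_card sum_bigcup_sub; last first.
    by apply: dsub => i; exact: subsetIl.
  apply: leq_sum => i; rewrite !inE => /andP [Hg Hp]; rewrite Hp /= in Hg.
  by rewrite sum1_card card_gt0.
have XC : X \subset C.
  apply/subsetP => x /bigcupP [i _]; rewrite inE => /andP [_ ->] //.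
have XW : [disjoint X & W2].
  rewrite -setI_eq0; apply/eqP/setP => x; rewrite !inE.
  apply/negbTE/negP => /andP [/bigcupP [i iB /setIP [xi _]] /bigcupP [j jT xj]].
  have ij : i != j.
    apply/negP => /eqP eij; subst j.
    move: iB jT; rewrite !inE => /andP [_ /eqP ->] /eqP; lia.
  by move: (disjointFr (dA i j ij) xi); rewrite xj.
have cXW : (#|X| + 2 * e <= #|C|)%N.
  rewrite -cW2; move: (leq_card_setU X W2); rewrite XW => -[_ /eqP <-].
  apply: subset_leq_card; by rewrite subUset XC W2C.
have cGB : (#|Good| + #|Bad| = f)%N.
  have PG : Pset :&: Good = Good by apply/setP => i; rewrite !inE; case: (_ == p).
  by rewrite -cP -(cardsID Good Pset) PG.
pose m := `|f%:Z - h|%N.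
have mE : m%:Z = f%:Z - h by rewrite /m gez0_abs //; lia.
have mG : (m <= #|Good|)%N.
  have : m%:Z <= #|Good|%:Z.
    rewrite mE /h; lia.
  by rewrite lez_nat.
pose Gm := [set i in take m (enum Good)].
have cGm : #|Gm| = m.
  rewrite cardsE (card_uniqP _) ?take_uniq ?enum_uniq // size_takel //.
  by rewrite -cardE.
have GmG : forall i, i \in Gm -> i \in Good.
  by move=> i; rewrite inE => /mem_take; rewrite mem_enum.
pose U := \bigcup_(i in Gm) A i.
have cU : #|U| = (p * m)%N.
  rewrite -sum1_card sum_bigcup_sub // (eq_bigr (fun _ => p)) => [|i iG].
    by rewrite sum_nat_const cGm mulnC.
  rewrite sum1_card cardA; move: (GmG i iG); rewrite !inE => /andP [/eqP -> _] //.
have sU : (\sum_(x in U) (x : nat).+1 = m * S)%N.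
  rewrite sum_bigcup_sub // (eq_bigr (fun _ => S)) => [|i _]; last exact: sumS.
  by rewrite sum_nat_const cGm.
have Uc : forall x, x \in U -> ((x : nat).+1)%:Z < c.
  move=> x /bigcupP [i iG xA]; move: (GmG i iG); rewrite !inE => /andP [_ /eqP I0].
  have : x \notin C.
    apply/negP => xC; have : x \in A i :&: C by rewrite inE xA xC.
    by rewrite I0 inE.
  by rewrite inE ltNge.
have TB := @top_bound n U c Uc.
rewrite -(big_morph Posz PoszD (erefl 0%:Z)) sU cU in TB.
rewrite -mE sE -PoszM in Hineq.
move: TB Hineq; set T := \sum_(j < _) _; move=> ? ?. lia.
Qed.
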